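(* Let $d,n\ge1$, $t=d+n$, $u=\binom{n+2}{2}$, $p=u(d+1)-1$, let ${\mathbb X}\subseteq{\mathbb P}^2$ be a set of $\binom{d+1}{2}$ points in generic position, and let ${\bf L}=(L_{lj})$, $F_1,\dots,F_{d+1}$, $\lambda_{ljk}$ and the matrix ${\bf E}$ be as in the context. Let $\overline{\Lambda_t}\subseteq{\mathbb P}^p$ be the closure of the image of the rational map $\varphi:{\mathbb P}^2 - - \rightarrow{\mathbb P}^p$, $\varphi([w_1:w_2:w_3])=[x_{ij}]$ with $x_{ij}=z_iF_j$. Let ${\bf V}\subseteq{\mathbb P}^p$ be the zero set of the following equations in the coordinates $x_{ij}$: (1) the $\binom{n+1}{2}d$ linear equations $\sum_{(\alpha,j)}{\bf E}_{(\beta,l),(\alpha,j)}x_{i(\alpha)j}=0$, one for each row $(\beta,l)$ of ${\bf E}$, where $i(\alpha)$ is the index with $z_{i(\alpha)}=w^\alpha$; (2) all $2\times2$ minors of the $u\times(d+1)$ matrix $(x_{ij})$; (3) for each $j=1,\dots,d+1$, all $2\times2$ minors of the $3\times\binom{n+1}{2}$ catalecticant matrix whose entry in row $k\in\{1,2,3\}$ and column $w^\beta$ ($|\beta|=n-1$) is $x_{i(\gamma)j}$ where $w^\gamma=w_kw^\beta$. Then ${\bf V}=\overline{\Lambda_t}$ as sets.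
   Context: $\mathfrak{k}$ is algebraically closed of characteristic $0$; $w^\alpha=w_1^{\alpha_1}w_2^{\alpha_2}w_3^{\alpha_3}$, $|\alpha|=\sum\alpha_i$. $z_1=w_1^n,z_2=w_1^{n-1}w_2,\dots,z_u=w_3^n$ are the degree-$n$ monomials in lexicographic order ($w_1>w_2>w_3$). ''Generic position'' means $\dim_{\mathfrak{k}}(\mathfrak{k}[w_1,w_2,w_3]/I_{\mathbb X})_s=\min\{\binom{s+2}{2},|{\mathbb X}|\}$ for all $s$; then the homogeneous ideal $I_{\mathbb X}$ is generated by $F_j=(-1)^{j+1}\det({\bf L}\setminus j\text{-th column})$, $j=1,\dots,d+1$, for a $d\times(d+1)$ matrix ${\bf L}=(L_{lj})$ of linear forms; write $L_{lj}=\sum_{k=1}^3\lambda_{ljk}w_k$. ${\bf E}$ is the matrix with rows indexed by $(\beta,l)$, $|\beta|=n-1$, $1\le l\le d$, columns indexed by $(\alpha,j)$, $|\alpha|=n$, $1\le j\le d+1$, and entry $\lambda_{ljk}$ if $w^\alpha=w^\beta w_k$ for some $k$, $0$ otherwise (so the linear equations (1) encode the relations $\sum_j L_{lj}w^\beta F_j=0$). $\overline{\Lambda_t}$ is the embedding of the blowup of ${\mathbb P}^2$ at ${\mathbb X}$ by the linear system of degree-$t$ forms in $I_{\mathbb X}$. *)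

(* Defs.v *)
From HB Require Import structures.
From mathcomp Require Import all_boot all_order all_algebra.
From mathcomp Require Import mpoly.
Set Implicit Arguments. Unset Strict Implicit. Unset Printing Implicit Defensive.
Import Order.TTheory GRing.Theory Num.Theory.
Local Open Scope ring_scope.

(* Monomials w^a in w_1,w_2,w_3 (indices 'I_3) of total degree m, as exponent
   vectors. *)
Definition mono (m : nat) :=
  {a : {ffun 'I_3 -> 'I_m.+1} | (\sum_(k < 3) (a k : nat))%N == m}.

Definition expo (m : nat) (a : mono m) (k : 'I_3) : nat := val (val a k).

Definition monev (K : ringType) (m : nat) (a : mono m) (w : 'I_3 -> K) : K :=
  \prod_(k < 3) w k ^+ expo a k.

(* Evaluation matrix of the degree-s monomials at the points of X
   (rows: monomials of degree s, columns: points). Its rank is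
   dim (k[w]/I_X)_s. *)
Definition evmx (K : ringType) (N s : nat) (pts : 'I_N -> 'I_3 -> K)
  : 'M[K]_(#|{: mono s}|, N) :=
  \matrix_(i < #|{: mono s}|, j < N) monev (enum_val i) (pts j).

Definition generic_position (K : fieldType) (N : nat) (pts : 'I_N -> 'I_3 -> K)
  : Prop :=
  forall s : nat, \rank (evmx s pts) = minn 'C(s.+2, 2) N.

Definition Lmat (K : comRingType) (d : nat) (lam : 'I_d -> 'I_d.+1 -> 'I_3 -> K)
  : 'M[{mpoly K[3]}]_(d, d.+1) :=
  \matrix_(l < d, j < d.+1) \sum_(k < 3) lam l j k *: 'X_k.

(* F_j = (-1)^(j+1) det(L minus j-th column), j 1-indexed;
   with 0-indexed j the sign is (-1)^j. *)
Definition Fpol (K : comRingType) (d : nat) (lam : 'I_d -> 'I_d.+1 -> 'I_3 -> K)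
  (j : 'I_d.+1) : {mpoly K[3]} :=
  (-1) ^+ j * \det (col' j (Lmat lam)).

(* f lies in the homogeneous ideal I_X (vanishes on the cone over X) *)
Definition in_IX (K : comRingType) (N : nat) (pts : 'I_N -> 'I_3 -> K)
  (f : {mpoly K[3]}) : Prop :=
  forall (i : 'I_N) (c : K), f.@[fun k => c * pts i k] = 0.

Definition IX_generated_by_F (K : comRingType) (N d : nat)
  (pts : 'I_N -> 'I_3 -> K) (lam : 'I_d -> 'I_d.+1 -> 'I_3 -> K) : Prop :=
  forall f : {mpoly K[3]},
    in_IX pts f <-> exists g : 'I_d.+1 -> {mpoly K[3]},
                      f = \sum_(j < d.+1) g j * Fpol lam j.

(* Coordinates x_{ij} of P^p, indexed by (w^alpha, j) with |alpha| = n,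
   i.e. i = i(alpha). *)
Definition pcoord (n d : nat) := (mono n * 'I_d.+1)%type.

(* x_{i(gamma) j} for a given exponent vector gamma (0 if |gamma| <> n) *)
Definition xat (K : ringType) (n d : nat) (x : pcoord n d -> K)
  (e : 'I_3 -> nat) (j : 'I_d.+1) : K :=
  match [pick a : mono n | [forall k, expo a k == e k]] with
  | Some a => x (a, j)
  | None => 0
  end.

Definition shiftexp (m : nat) (b : mono m) (k : 'I_3) : 'I_3 -> nat :=
  fun k' => (expo b k' + (k' == k))%N.

Definition Eent (K : ringType) (n d : nat) (lam : 'I_d -> 'I_d.+1 -> 'I_3 -> K)
  (b : mono n.-1) (l : 'I_d) (a : mono n) (j : 'I_d.+1) : K :=
  match [pick k : 'I_3 | [forall k', expo a k' == shiftexp b k k']] with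
  | Some k => lam l j k
  | None => 0
  end.

Definition inV (K : ringType) (n d : nat) (lam : 'I_d -> 'I_d.+1 -> 'I_3 -> K)
  (x : pcoord n d -> K) : Prop :=
  (forall (b : mono n.-1) (l : 'I_d),
      \sum_(aj : pcoord n d) Eent lam b l aj.1 aj.2 * x aj = 0)
  /\
  (forall (a a' : mono n) (j j' : 'I_d.+1),
      x (a, j) * x (a', j') - x (a, j') * x (a', j) = 0)
  /\
  (forall (j : 'I_d.+1) (k k' : 'I_3) (b b' : mono n.-1),
      xat x (shiftexp b k) j * xat x (shiftexp b' k') j
      - xat x (shiftexp b' k) j * xat x (shiftexp b k') j = 0).

(* image of phi : [w] |-> [z_i(w) F_j(w)], as nonzero affine representatives *)
Definition in_image_phi (K : comRingType) (n d : nat)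
  (lam : 'I_d -> 'I_d.+1 -> 'I_3 -> K) (x : pcoord n d -> K) : Prop :=
  (exists c, x c != 0) /\
  exists w : 'I_3 -> K,
    forall (a : mono n) (j : 'I_d.+1), x (a, j) = monev a w * (Fpol lam j).@[w].

Definition zariski_closure (K : comRingType) (I : finType)
  (S : (I -> K) -> Prop) (x : I -> K) : Prop :=
  forall (D : nat) (f : {mpoly K[#|{: I}|]}),
    f \is D.-homog ->
    (forall y, S y -> f.@[fun i => y (enum_val i)] = 0) ->
    f.@[fun i => x (enum_val i)] = 0.

(* Main.v *)
Require Import Defs.
From HB Require Import structures.
From mathcomp Require Import all_boot all_order all_algebra.
From mathcomp Require Import mpoly.
From mathcomp Require Import ring.
From Stdlib Require Import Classical FunctionalExtensionality.
Import GRing.Theory.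
Local Open Scope ring_scope.
Set Implicit Arguments. Unset Strict Implicit. Unset Printing Implicit Defensive.

Section Mono.
Variable m : nat.

Lemma expo_sum (a : mono m) : (\sum_(k < 3) expo a k)%N = m.
Proof. by case: a => f hf; apply/eqP. Qed.

Lemma expo_le (a : mono m) k : (expo a k <= m)%N.
Proof. by rewrite /expo -ltnS ltn_ord. Qed.

Lemma expo_inj (a a' : mono m) : (forall k, expo a k = expo a' k) -> a = a'.
Proof. by move=> H; apply: val_inj; apply/ffunP => k; apply: val_inj; exact: H. Qed.

Lemma le_sum3 (e : 'I_3 -> nat) k : (e k <= \sum_(i < 3) e i)%N.
Proof. by rewrite (bigD1 k) //= leq_addr. Qed.

Lemma mkmono_proof (e : 'I_3 -> nat) (h : (\sum_(k < 3) e k)%N = m) :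
  (\sum_(k < 3) ([ffun k => inord (e k)] : {ffun 'I_3 -> 'I_m.+1}) k == m)%N.
Proof.
apply/eqP; rewrite -[RHS]h; apply: eq_bigr => k _; rewrite ffunE inordK //.
by rewrite ltnS -h le_sum3.
Qed.

Definition mkmono (e : 'I_3 -> nat) (h : (\sum_(k < 3) e k)%N = m) : mono m :=
  exist (fun a : {ffun 'I_3 -> 'I_m.+1} => (\sum_(k < 3) (a k : nat) == m)%N) _ (mkmono_proof h).

Lemma expo_mkmono e h k : expo (@mkmono e h) k = e k.
Proof. by rewrite /expo /= ffunE inordK // ltnS -h le_sum3. Qed.

End Mono.

Lemma xat_expo (K : ringType) n d (x : pcoord n d -> K) (a : mono n) e j :
  (forall k, expo a k = e k) -> xat x e j = x (a, j).
Proof.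
move=> H; rewrite /xat; case: pickP => [a' /forallP Ha'|Hn].
  by congr x; congr pair; apply: expo_inj => k; rewrite H; apply/eqP.
by move: (Hn a) => /forallP []; move=> k; rewrite H.
Qed.

Lemma xat_ext (K : ringType) n d (x : pcoord n d -> K) e e' j :
  e =1 e' -> xat x e j = xat x e' j.
Proof.
move=> H; rewrite /xat; rewrite (eq_pick (Q := [pred a : mono n | [forall k, expo a k == e' k]])) //.
by move=> a /=; apply: eq_forallb => k; rewrite H.
Qed.

Lemma shift_sum n (hn : (0 < n)%N) (b : mono n.-1) (k : 'I_3) :
  (\sum_(i < 3) shiftexp b k i)%N = n.
Proof.
rewrite /shiftexp big_split /= expo_sum (bigD1 k) //= eqxx big1 ?addn0.
  by rewrite addn1 prednK.
by move=> i /negbTE ->.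
Qed.

Definition mshift n (hn : (0 < n)%N) (b : mono n.-1) (k : 'I_3) : mono n :=
  mkmono (shift_sum hn b k).

Lemma expo_mshift n hn b k i : expo (@mshift n hn b k) i = (expo b i + (i == k))%N.
Proof. by rewrite expo_mkmono. Qed.

Lemma mshift_inj n hn b k k' : @mshift n hn b k = mshift hn b k' -> k = k'.
Proof.
move=> H; have := expo_mshift hn b k k; rewrite H expo_mshift.
by move/addnI; case: (k =P k') => // _; case: (k =P k).
Qed.

Lemma monev_mshift (K : comRingType) n hn b k (w : 'I_3 -> K) :
  monev (@mshift n hn b k) w = monev b w * w k.
Proof.
rewrite /monev (eq_bigr (fun i => w i ^+ expo b i * w i ^+ (i == k))); last first.
  by move=> i _; rewrite expo_mshift exprD.
rewrite big_split /= [X in _ * X](bigD1 k) //= eqxx expr1 [X in _ * (_ * X)]big1 ?mulr1 //.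
by move=> i /negbTE ->; rewrite expr0.
Qed.

Lemma xat_shift (K : ringType) n d (x : pcoord n d -> K) (hn : (0 < n)%N) b k j :
  xat x (shiftexp b k) j = x (mshift hn b k, j).
Proof. by apply: xat_expo => i; rewrite expo_mshift. Qed.

Lemma sum_delta (R : nmodType) (T : finType) (s : T) (G : T -> R) :
  \sum_(a : T) (if a == s then G a else 0) = G s.
Proof. by rewrite (bigD1 s) //= eqxx big1 ?addr0 // => a /negbTE ->. Qed.

Lemma Eent_sum (K : ringType) n d (hn : (0 < n)%N) lam b l (a : mono n) (j : 'I_d.+1) :
  @Eent K n d lam b l a j = \sum_k (if a == mshift hn b k then lam l j k else 0).
Proof.
rewrite /Eent; case: pickP => [k0 /forallP Hk0|Hn].
  have ->: a = mshift hn b k0 by apply: expo_inj => i; rewrite expo_mshift; apply/eqP.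
  rewrite (bigD1 k0) //= eqxx big1 ?addr0 // => k Hk.
  case: eqP => // /mshift_inj E; by rewrite E eqxx in Hk.
rewrite big1 // => k _; case: eqP => // E.
have := Hn k; rewrite E => /negbT/negP; case; apply/forallP => i.
by rewrite expo_mshift.
Qed.

Lemma Esum (K : comRingType) n d (hn : (0 < n)%N) (lam : 'I_d -> 'I_d.+1 -> 'I_3 -> K)
  b l (w : 'I_3 -> K) (t : 'I_d.+1 -> K) :
  \sum_(aj : pcoord n d) Eent lam b l aj.1 aj.2 * (monev aj.1 w * t aj.2)
  = monev b w * \sum_j t j * \sum_k lam l j k * w k.
Proof.
rewrite -(pair_bigA _ (fun a j => Eent lam b l a j * (monev a w * t j))) /=.
rewrite exchange_big mulr_sumr; apply: eq_bigr => j _ /=.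
rewrite (eq_bigr (fun a => \sum_k (if a == mshift hn b k then lam l j k * (monev a w * t j) else 0))); last first.
  move=> a _; rewrite (Eent_sum hn) mulr_suml; apply: eq_bigr => k _.
  by case: eqP => _; rewrite ?mul0r.
rewrite exchange_big /= mulr_sumr mulr_sumr; apply: eq_bigr => k _.
rewrite (sum_delta (mshift hn b k) (fun a => lam l j k * (monev a w * t j))) monev_mshift.
rewrite mulrC -!mulrA; congr (_ * _); rewrite mulrC -!mulrA; congr (_ * _); exact: mulrC.
Qed.

Lemma LF0_gen (R : comRingType) d (M : 'M[R]_(d, d.+1)) (l : 'I_d) :
  \sum_j M l j * ((-1) ^+ j * \det (col' j M)) = 0.
Proof.
pose A : 'M[R]_d.+1 := \matrix_(i, j) (if unlift 0 i is Some i' then M i' j else M l j).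
have A0 : \det A = 0.
  apply: (@determinant_alternate _ _ A 0 (lift 0 l)).
    by apply/eqP => /(congr1 val) /=.
  by move=> j; rewrite !mxE unlift_none liftK.
rewrite -[RHS]A0 (expand_det_row A 0); apply: eq_bigr => j _; rewrite /A.
rewrite !mxE unlift_none /cofactor add0n; congr (_ * (_ * _)).
by congr (\det _); apply/matrixP => i j'; rewrite !mxE liftK.
Qed.

Definition Lev (K : comRingType) d (lam : 'I_d -> 'I_d.+1 -> 'I_3 -> K) (w : 'I_3 -> K)
  : 'M[K]_(d, d.+1) := \matrix_(l, j) \sum_k lam l j k * w k.

Lemma Fpol_morph (K : comRingType) (S : comRingType) (f : {rmorphism {mpoly K[3]} -> S}) d lam j :
  f (@Fpol K d lam j) = (-1) ^+ j * \det (col' j (map_mx f (Lmat lam))).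
Proof.
rewrite /Fpol rmorphM rmorphXn rmorphN1 -det_map_mx; congr (_ * \det _).
by apply/matrixP => a b; rewrite !mxE.
Qed.

Lemma LF0 (K : comRingType) d lam (l : 'I_d) :
  \sum_j (Lmat lam) l j * @Fpol K d lam j = 0.
Proof. exact: LF0_gen. Qed.

Lemma meval_Lmat (K : comRingType) d lam (w : 'I_3 -> K) :
  map_mx (meval w) (@Lmat K d lam) = Lev lam w.
Proof.
apply/matrixP => l j; rewrite !mxE /= rmorph_sum; apply: eq_bigr => k _.
by rewrite /= mevalZ mevalXU.
Qed.

Lemma Fpol_eval (K : comRingType) d lam (w : 'I_3 -> K) j :
  (@Fpol K d lam j).@[w] = (-1) ^+ j * \det (col' j (Lev lam w)).
Proof. by rewrite -meval_Lmat -(Fpol_morph (meval w)). Qed.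

Lemma LF0_eval (K : comRingType) d lam (w : 'I_3 -> K) (l : 'I_d) :
  \sum_j (\sum_k lam l j k * w k) * (@Fpol K d lam j).@[w] = 0.
Proof.
have := congr1 (meval w) (LF0 lam l); rewrite rmorph_sum rmorph0 => E.
rewrite -[RHS]E; apply: eq_bigr => j _; rewrite rmorphM /=.
congr (_ * _); have := congr1 (fun M : 'M[K]_(d, d.+1) => M l j) (meval_Lmat lam w).
by rewrite !mxE.
Qed.

Section Easy.
Variables (K : comRingType) (n d : nat).
Local Notation N := #|{: pcoord n d}|.

Definition Xc (c : pcoord n d) : {mpoly K[N]} := 'X_(enum_rank c).

Definition evx (x : pcoord n d -> K) : 'I_N -> K := fun i => x (enum_val i).

Lemma Xc_eval x c : (Xc c).@[evx x] = x c.
Proof. by rewrite /Xc mevalXU /evx enum_rankK. Qed.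

Lemma Xc_homog c : Xc c \is 1.-homog.
Proof. by rewrite /Xc dhomogX; apply/eqP; apply: mdeg1. Qed.

Definition xatP e j : {mpoly K[N]} :=
  match [pick a : mono n | [forall k, expo a k == e k]] with
  | Some a => Xc (a, j)
  | None => 0
  end.

Lemma xatP_eval x e j : (xatP e j).@[evx x] = xat x e j.
Proof. by rewrite /xatP /xat; case: pickP => [a _|_]; rewrite ?Xc_eval ?meval0. Qed.

Lemma xatP_homog e j : xatP e j \is 1.-homog.
Proof. by rewrite /xatP; case: pickP => [a _|_]; rewrite ?Xc_homog ?dhomog0. Qed.

Lemma homog_minor (A B C D : {mpoly K[N]}) :
  A \is 1.-homog -> B \is 1.-homog -> C \is 1.-homog -> D \is 1.-homog ->
  A * B - C * D \is 2.-homog.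
Proof.
move=> hA hB hC hD; apply: rpredB; exact: (dhomogM (d := 1%N) (e := 1%N)).
Qed.

End Easy.

Lemma closure_to_V (K : comRingType) n d (hn : (0 < n)%N) lam (x : pcoord n d -> K) :
  zariski_closure (in_image_phi lam) x -> inV lam x.
Proof.
move=> H.
have img : forall y : pcoord n d -> K, in_image_phi lam y -> exists w : 'I_3 -> K,
    forall a j, y (a, j) = monev a w * (Fpol lam j).@[w].
  by move=> y [_ [w Hw]]; exists w.
split; [|split].
- move=> b l.
  pose P : {mpoly K[#|{: pcoord n d}|]} := \sum_(aj : pcoord n d) Eent lam b l aj.1 aj.2 *: Xc K aj.
  have PE : forall y, P.@[evx y] = \sum_(aj : pcoord n d) Eent lam b l aj.1 aj.2 * y aj.
    move=> y; rewrite /P rmorph_sum; apply: eq_bigr => aj _.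
    by rewrite /= mevalZ Xc_eval.
  rewrite -PE; apply: (H 1%N).
    by apply: rpred_sum => aj _; apply: rpredZ; apply: Xc_homog.
  move=> y /img [w Hw]; rewrite PE.
  rewrite (eq_bigr (fun aj => Eent lam b l aj.1 aj.2 * (monev aj.1 w * (Fpol lam aj.2).@[w]))); last first.
    by case=> a j _ /=; rewrite Hw.
  rewrite (Esum hn lam b l w (fun j => (Fpol lam j).@[w])) (eq_bigr (fun j => (\sum_k lam l j k * w k) * (Fpol lam j).@[w]))
    ?LF0_eval ?mulr0 // => j _; exact: mulrC.
- move=> a a' j j'.
  have := H 2%N (Xc K (a, j) * Xc K (a', j') - Xc K (a, j') * Xc K (a', j)) (homog_minor (Xc_homog _ _) (Xc_homog _ _) (Xc_homog _ _) (Xc_homog _ _)).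
  rewrite mevalB !mevalM !Xc_eval; apply => y /img [w Hw].
  rewrite mevalB !mevalM !Xc_eval !Hw.
  move: (monev a w) (monev a' w) (Fpol lam j).@[w] (Fpol lam j').@[w] => A B C D.
  ring.
- move=> j k k' b b'.
  have := H 2%N _ (homog_minor (@xatP_homog K n d (shiftexp b k) j) (@xatP_homog K n d (shiftexp b' k') j) (@xatP_homog K n d (shiftexp b' k) j) (@xatP_homog K n d (shiftexp b k') j)).
  rewrite mevalB !mevalM !xatP_eval; apply => y /img [w Hw].
  rewrite mevalB !mevalM !xatP_eval !(xat_shift _ hn) !Hw !(monev_mshift hn).
  move: (monev b w) (monev b' w) (w k) (w k') (Fpol lam j).@[w] => A B C D E.
  ring.
Qed.

Definition E3 := {ffun 'I_3 -> nat}.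
Definition deg3 (e : E3) := (\sum_(k < 3) e k)%N.
Definition addu (e : E3) (k : 'I_3) : E3 := [ffun i => (e i + (i == k))%N].
Definition subu (e : E3) (k : 'I_3) : E3 := [ffun i => (e i - (i == k))%N].
Definition pw (K : ringType) (w : 'I_3 -> K) (e : E3) : K := \prod_(i < 3) w i ^+ e i.
Definition e0 : E3 := [ffun => 0%N].

Lemma sum_delta_nat (k : 'I_3) : (\sum_(i < 3) (i == k))%N = 1%N.
Proof. by rewrite (bigD1 k) //= eqxx big1 // => i /negbTE ->. Qed.

Lemma deg_addu e k : deg3 (addu e k) = (deg3 e).+1.
Proof.
rewrite /deg3 (eq_bigr (fun i => e i + (i == k)))%N; last by move=> i _; rewrite ffunE.
by rewrite big_split /= sum_delta_nat addn1.
Qed.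

Lemma pw_addu (K : comRingType) (w : 'I_3 -> K) e k : pw w (addu e k) = pw w e * w k.
Proof.
rewrite /pw (eq_bigr (fun i => w i ^+ e i * w i ^+ (i == k))); last first.
  by move=> i _; rewrite ffunE exprD.
rewrite big_split /= [X in _ * X](bigD1 k) //= eqxx expr1 [X in _ * (_ * X)]big1 ?mulr1 //.
by move=> i /negbTE ->; rewrite expr0.
Qed.

Lemma addu_comm e k k' : addu (addu e k) k' = addu (addu e k') k.
Proof. by apply/ffunP => i; rewrite !ffunE -!addnA [((i == k) + _)%N]addnC. Qed.

Lemma deg_decomp e s : deg3 e = s.+1 -> exists k b, deg3 b = s /\ e = addu b k.
Proof.
move=> He.
have [k Hk] : exists k, (0 < e k)%N.
  apply/existsP; apply: contraT; rewrite negb_exists => /forallP H.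
  move: He; rewrite /deg3 big1 // => i _; by move: (H i); rewrite lt0n negbK => /eqP.
have Ee : addu (subu e k) k = e.
  apply/ffunP => i; rewrite !ffunE; case: eqP => [->|_]; last by rewrite subn0 addn0.
  by rewrite subn1 addn1 prednK.
exists k, (subu e k); split => //.
by apply: succn_inj; rewrite -(deg_addu _ k) Ee He.
Qed.

Lemma deg0 e : deg3 e = 0%N -> e = e0.
Proof.
move=> H; apply/ffunP => i; rewrite ffunE; apply/eqP; rewrite -leqn0 -[X in (_ <= X)%N]H.
by rewrite /deg3 (bigD1 i) //= leq_addr.
Qed.

Definition Cat (K : ringType) (s : nat) (Z : E3 -> K) :=
  forall b b', deg3 b = s -> deg3 b' = s -> forall k k',
    Z (addu b k) * Z (addu b' k') = Z (addu b' k) * Z (addu b k').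

Lemma veronese (K : fieldType) s : forall Z : E3 -> K, Cat s Z ->
  (exists e, deg3 e = s.+1 /\ Z e != 0) ->
  exists mu (w : 'I_3 -> K), forall e, deg3 e = s.+1 -> Z e = mu * pw w e.
Proof.
elim: s => [|s IH] Z HC [ez [Hez Zez]].
  exists 1, (fun k => Z (addu e0 k)) => e /deg_decomp [k [b [/deg0 -> ->]]].
  rewrite pw_addu mul1r /pw big1 ?mul1r // => i _; by rewrite ffunE expr0.
have [k0 [b0 [Hb0 Eb0]]] := deg_decomp Hez.
set Z0 := Z (addu b0 k0).
have Z0n : Z0 != 0 by rewrite /Z0 -Eb0.
pose u k := Z (addu b0 k).
pose c b := Z (addu b k0) / Z0.
have F1 : forall b, deg3 b = s.+1 -> forall k, Z (addu b k) = u k * c b.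
  move=> b Hb k; rewrite /u /c mulrA; apply: (canRL (mulfK Z0n)).
  by rewrite /Z0 HC.
have uk0 : u k0 = Z0 by [].
have cb0 : c b0 = 1 by rewrite /c divff.
have F2 : forall be, deg3 be = s -> forall k, u k0 * c (addu be k) = u k * c (addu be k0).
  move=> be Hbe k; rewrite -F1 ?deg_addu ?Hbe // -F1 ?deg_addu ?Hbe //.
  by rewrite addu_comm.
have Cc : Cat s c.
  move=> be be' Hbe Hbe' k k'.
  apply: (mulfI (mulf_neq0 Z0n Z0n)).
  have E1 : u k0 * u k0 * (c (addu be k) * c (addu be' k')) =
    (u k0 * c (addu be k)) * (u k0 * c (addu be' k')) by ring.
  have E2 : u k0 * u k0 * (c (addu be' k) * c (addu be k')) =
    (u k0 * c (addu be' k)) * (u k0 * c (addu be k')) by ring.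
  rewrite -uk0 E1 E2 !F2 //; ring.
have cb0n : c b0 != 0 by rewrite cb0 oner_neq0.
have [mu [v Hv]] := IH c Cc (ex_intro _ b0 (conj Hb0 cb0n)).
have [k1 [be1 [Hbe1 Eb1]]] := deg_decomp Hb0.
have H1 : mu * pw v b0 = 1 by rewrite -Hv.
have Hne : mu * pw v be1 != 0.
  apply: contra_neq (oner_neq0 K) => E.
  by rewrite -H1 Eb1 pw_addu mulrA E mul0r.
have Hu : forall k, u k0 * v k = u k * v k0.
  move=> k; apply: (mulfI Hne); have := F2 be1 Hbe1 k.
  rewrite !Hv ?deg_addu ?Hbe1 // !pw_addu => E.
  rewrite [LHS](_ : _ = u k0 * (mu * (pw v be1 * v k))); last ring.
  by rewrite E; ring.
have vk0 : v k0 != 0.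
  apply/eqP => v0.
  have vz : forall k, v k = 0.
    move=> k; have := Hu k; rewrite v0 mulr0 => /eqP; rewrite mulf_eq0 uk0 (negbTE Z0n) /=.
    by move/eqP.
  by move: H1; rewrite Eb1 pw_addu vz !mulr0 => /eqP; rewrite eq_sym oner_eq0.
exists (u k0 / v k0 * mu), v => e /deg_decomp [k [b [Hb ->]]].
rewrite F1 // Hv // pw_addu.
have -> : u k = u k0 / v k0 * v k by rewrite mulrAC Hu mulfK.
ring.
Qed.

Definition expf n (a : mono n) : E3 := [ffun k => expo a k].

Lemma deg_expf n (a : mono n) : deg3 (expf a) = n.
Proof. by rewrite /deg3 -[RHS](expo_sum a); apply: eq_bigr => k _; rewrite ffunE. Qed.

Lemma pw_expf (K : ringType) n (a : mono n) (w : 'I_3 -> K) : pw w (expf a) = monev a w.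
Proof. by rewrite /pw /monev; apply: eq_bigr => k _; rewrite ffunE. Qed.

Lemma pw_nz_w (K : fieldType) (w : 'I_3 -> K) e s : deg3 e = s.+1 -> pw w e != 0 ->
  exists k, w k != 0.
Proof.
move=> /deg_decomp [k [b [_ ->]]]; rewrite pw_addu mulf_eq0 negb_or => /andP [_ H].
by exists k.
Qed.

Lemma V_structure (K : fieldType) n d (hn : (0 < n)%N) lam (x : pcoord n d -> K) :
  (exists c, x c != 0) -> inV lam x ->
  exists (w : 'I_3 -> K) (sg : 'I_d.+1 -> K),
    [/\ exists k, w k != 0, exists j, sg j != 0,
        forall a j, x (a, j) = monev a w * sg j &
        forall l, \sum_j (\sum_k lam l j k * w k) * sg j = 0].
Proof.
move=> [[a0 j0] x0] [H1 [H2 H3]].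
have Hx : forall a j, x (a, j) = x (a, j0) * (x (a0, j) / x (a0, j0)).
  move=> a j; rewrite mulrA; apply: (canRL (mulfK x0)).
  by apply/eqP; rewrite -subr_eq0 H2.
pose Z (e : E3) := xat x e j0.
have HC : Cat n.-1 Z.
  move=> b b' hb hb' k k'.
  have Eb : forall (b : E3) (hb : deg3 b = n.-1) k,
      Z (addu b k) = xat x (shiftexp (mkmono hb) k) j0.
    move=> c hc kk; apply: xat_ext => i; by rewrite /shiftexp expo_mkmono ffunE.
  rewrite !Eb; apply/eqP; rewrite -subr_eq0; apply/eqP; exact: H3.
have Zexp : forall a, Z (expf a) = x (a, j0) by move=> a; apply: xat_expo => k; rewrite ffunE.
have HZ : exists e, deg3 e = n.-1.+1 /\ Z e != 0.
  by exists (expf a0); rewrite prednK // deg_expf Zexp.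
have [mu [w Hw]] := veronese HC HZ.
have Hxa : forall a, x (a, j0) = mu * monev a w.
  by move=> a; rewrite -Zexp Hw ?prednK ?deg_expf // pw_expf.
have mu0 : mu != 0.
  by apply: contra_neq x0 => mu0; rewrite Hxa mu0 mul0r.
have wnz : exists k, w k != 0.
  apply: (@pw_nz_w _ w (expf a0) n.-1); first by rewrite prednK // deg_expf.
  by rewrite pw_expf; apply: contra_neq x0 => E; rewrite Hxa E mulr0.
pose sg j := mu * (x (a0, j) / x (a0, j0)).
have Hxs : forall a j, x (a, j) = monev a w * sg j.
  by move=> a j; rewrite Hx Hxa /sg; ring.
exists w, sg; split => //.
  by exists j0; rewrite /sg divff // mulr1.
move=> l.
have [k1 wk1] := wnz.
pose e1 : 'I_3 -> nat := fun i => if i == k1 then n.-1 else 0%N.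
have he1 : (\sum_(i < 3) e1 i)%N = n.-1.
  rewrite (bigD1 k1) //= /e1 eqxx big1 ?addn0 // => i /negbTE -> //.
pose b1 := mkmono he1.
have mb1 : monev b1 w != 0.
  rewrite /monev (bigD1 k1) //= big1 ?mulr1; first by rewrite expo_mkmono /e1 eqxx expf_neq0.
  by move=> i /negbTE Hi; rewrite expo_mkmono /e1 Hi expr0.
have := H1 b1 l.
rewrite (eq_bigr (fun aj => Eent lam b1 l aj.1 aj.2 * (monev aj.1 w * sg aj.2))); last first.
  by case=> a j _; rewrite Hxs.
rewrite (Esum hn lam b1 l w sg) => /eqP; rewrite mulf_eq0 (negbTE mb1) /= => /eqP E.
rewrite -[RHS]E; apply: eq_bigr => j _; exact: mulrC.
Qed.

Lemma homog_scale (K : comRingType) N D (f : {mpoly K[N]}) (c : K) (v : 'I_N -> K) :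
  f \is D.-homog -> f.@[fun i => c * v i] = c ^+ D * f.@[v].
Proof.
move=> /dhomogP hf; rewrite !mevalE mulr_sumr; apply: eq_big_seq => m hm.
rewrite mulrCA; congr (_ * _).
rewrite (eq_bigr (fun i => c ^+ m i * v i ^+ m i)); last by move=> i _; rewrite exprMn.
by rewrite big_split /= prodrXr -mdegE -[mdeg m]/(mdeg m) (hf m hm).
Qed.

Lemma hmmap (K : comRingType) N (f : {mpoly K[N]}) (h : 'I_N -> {poly K}) (t : K) :
  (mmap polyC h f).[t] = f.@[fun i => (h i).[t]].
Proof.
rewrite /mmap mevalE horner_sum; apply: eq_bigr => m _.
by rewrite hornerCM /mmap1 horner_prod; congr (_ * _); apply: eq_bigr => i _; rewrite horner_exp.
Qed.

Lemma natf_inj (K : fieldType) (charK : [pchar K] =i pred0) (a b : nat) :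
  a%:R = b%:R :> K -> a = b.
Proof.
wlog le_ab : a b / (a <= b)%N.
  by move=> H E; case: (leqP a b) => [/H -> //|/ltnW /H ->].
move=> E; apply/eqP; rewrite eqn_leq le_ab /=; apply: contraT; rewrite -ltnNge => lt_ab.
have h0 : (0 < b - a)%N by rewrite subn_gt0.
have h1 : (b - a)%:R == 0 :> K by rewrite natrB ?(ltnW lt_ab) // E subrr.
have [p Hp] := natf0_pchar h0 h1.
by rewrite charK in Hp.
Qed.

Lemma natf_neq0 (K : fieldType) (charK : [pchar K] =i pred0) (a : nat) :
  (a.+1)%:R != 0 :> K.
Proof.
apply/negP => h1; have [p Hp] := natf0_pchar (ltn0Sn a) h1.
by rewrite charK in Hp.
Qed.

Lemma poly_zero_nz (K : fieldType) (charK : [pchar K] =i pred0) (p : {poly K}) :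
  (forall t, t != 0 -> p.[t] = 0) -> p = 0.
Proof.
move=> H; apply/eqP; apply: contraT => pn0.
pose rs := [seq (i.+1)%:R : K | i <- iota 0 (size p)].
have := max_poly_roots pn0 (rs := rs).
rewrite size_map size_iota ltnn; apply.
  apply/allP => t /mapP [i _ ->]; apply/rootP; apply: H.
  exact: natf_neq0.
rewrite map_inj_uniq ?iota_uniq // => i j E; have := natf_inj charK E; case.
by [].
Qed.

Lemma mpoly_gen (K : ringType) N (Q : {mpoly K[N]} -> Prop) :
  (forall c, Q c%:MP) -> (forall i, Q 'X_i) ->
  (forall P R, Q P -> Q R -> Q (P + R)) -> (forall P R, Q P -> Q R -> Q (P * R)) ->
  forall P, Q P.
Proof.
move=> HC HX HD HM P.
have Q0 : Q 0 by rewrite -mpolyC0; apply: HC.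
have Q1 : Q 1 by rewrite -mpolyC1; apply: HC.
have QX : forall m, Q 'X_[m].
  move=> m; rewrite mpolyXE_id.
  apply: (big_ind Q Q1 HM) => i _.
  elim: (m i) => [|e IH]; first by rewrite expr0.
  by rewrite exprS; apply: HM.
rewrite (mpolyE P); apply: (big_ind Q Q0 HD) => m _.
by rewrite -mul_mpolyC; apply: HM.
Qed.

Section Line.
Variable K : comRingType.
Variables (p q : 'I_3 -> K).

Definition lineP (P : {mpoly K[3]}) : {poly K} :=
  mmap polyC (fun k => (p k)%:P + (q k)%:P * 'X) P.

Lemma lineP_eval P t : (lineP P).[t] = P.@[fun k => p k + q k * t].
Proof.
rewrite /lineP hmmap; apply: meval_eq => k.
by rewrite hornerD hornerC hornerCM hornerX.
Qed.

Lemma lineP_coef0 P : (lineP P)`_0 = P.@[p].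
Proof.
by rewrite -horner_coef0 lineP_eval; apply: meval_eq => k; rewrite mulr0 addr0.
Qed.

Lemma mderivXE (i k : 'I_3) : ('X_i : {mpoly K[3]})^`M(k) = (i == k)%:R%:MP.
Proof.
rewrite mderivX mnm1E; case: eqP => [->|_]; last by rewrite scale0r mpolyC0.
have -> : (U_(k) - U_(k))%MM = 0%MM by apply/mnmP => j; rewrite mnmBE mnm0E subnn.
by rewrite scale1r mpolyX0 mpolyC1.
Qed.

Lemma Dlem P : (lineP P)`_1 = \sum_k q k * (P^`M(k)).@[p].
Proof.
elim/mpoly_gen: P => [c|i|P R HP HR|P R HP HR].
- rewrite /lineP mmapC coefC /= big1 // => k _.
  by rewrite mderivC meval0 mulr0.
- rewrite /lineP mmapX mmap1U coefD coefC coefCM coefX /= mulr1 add0r.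
  rewrite (bigD1 i) //= big1 ?addr0; first by rewrite mderivXE eqxx mevalC mulr1.
  by move=> k /negbTE Hk; rewrite mderivXE eq_sym Hk mevalC mulr0.
- rewrite /lineP rmorphD coefD -/(lineP P) -/(lineP R) HP HR.
  rewrite [RHS](eq_bigr (fun k => q k * (P^`M(k)).@[p] + q k * (R^`M(k)).@[p])) ?big_split //.
  by move=> k _; rewrite mderivD mevalD mulrDr.
- rewrite /lineP rmorphM -/(lineP P) -/(lineP R) coefM big_ord_recr big_ord1 /=.
  rewrite !lineP_coef0 HP HR.
  rewrite [RHS](eq_bigr (fun k => P.@[p] * (q k * (R^`M(k)).@[p]) + q k * (P^`M(k)).@[p] * R.@[p])).
    by rewrite big_split /=; congr (_ + _); [exact: mulr_sumr | exact: mulr_suml].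
  move=> k _; rewrite mderivM mevalD !mevalM; ring.
Qed.
End Line.

Lemma col'_mul (R : comRingType) m n (A : 'M[R]_(m, n.+1)) j : col' j A = A *m col' j 1%:M.
Proof.
apply/matrixP => i k; rewrite !mxE (bigD1 (lift j k)) //= !mxE eqxx mulr1 big1 ?addr0 //.
by move=> i' Hi'; rewrite !mxE (negbTE Hi') mulr0.
Qed.

Lemma rank_col' (K : fieldType) m n (A : 'M[K]_(m, n.+1)) j : (\rank (col' j A) <= \rank A)%N.
Proof. by rewrite col'_mul mxrankM_maxl. Qed.

Lemma sum_ge_r m r : (\sum_(i < m) (r <= i))%N = (m - r)%N.
Proof.
case: (leqP r m) => hrm.
  rewrite -(big_mkord xpredT (fun i => nat_of_bool (r <= i)%N)) (big_cat_nat (leq0n r) hrm) /=.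
  rewrite big_nat_cond big1 ?add0n; last by move=> i /andP [/andP [_ h] _]; rewrite leqNgt h.
  rewrite big_nat_cond (eq_bigr (fun _ => 1%N)); last by move=> i /andP [/andP [h _] _]; rewrite h.
  by rewrite -big_nat_cond sum_nat_const_nat muln1.
have -> : (m - r = 0)%N by apply/eqP; rewrite subn_eq0 ltnW.
apply: big1 => i _; by rewrite leqNgt (leq_trans (ltn_ord i) (ltnW hrm)).
Qed.

Lemma det_pid_coef1 (K : comRingType) m r (C : 'M[K]_m) : (r.+2 <= m)%N ->
  (\det (map_mx polyC (pid_mx r) + 'X *: map_mx polyC C))`_1 = 0.
Proof.
move=> hr.
set M0 := _ + _.
pose D : 'M[{poly K}]_m := diag_mx (\row_i (if (i < r)%N then 1 else 'X)).
pose N : 'M[{poly K}]_m := \matrix_(i, j) (if (i < r)%N then M0 i j else (C i j)%:P).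
have E : M0 = D *m N.
  rewrite /D /N mul_diag_mx; apply/matrixP => i j; rewrite !mxE.
  case: ifP => hi; first by rewrite mul1r.
  by rewrite andbF mulr0n polyC0 add0r.
rewrite E det_mulmx det_diag.
rewrite (eq_bigr (fun i : 'I_m => 'X ^+ (r <= i)%N)); last first.
  by move=> i _; rewrite mxE; case: ltnP => h; rewrite ?expr0 ?expr1.
rewrite prodrXr sum_ge_r coefXnM.
have -> : (1 < m - r)%N by rewrite ltn_subRL addn1.
by [].
Qed.

Lemma det_lowrank_coef1 (K : fieldType) m (A B : 'M[K]_m) : ((\rank A).+2 <= m)%N ->
  (\det (map_mx polyC A + 'X *: map_mx polyC B))`_1 = 0.
Proof.
move=> hr.
set P1 := col_ebase A; set Q1 := row_ebase A.
have uP : P1 \in unitmx by apply: col_ebase_unit.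
have uQ : Q1 \in unitmx by apply: row_ebase_unit.
pose C := invmx P1 *m B *m invmx Q1.
have E : map_mx polyC A + 'X *: map_mx polyC B =
   map_mx polyC P1 *m (map_mx polyC (pid_mx (\rank A)) + 'X *: map_mx polyC C) *m map_mx polyC Q1.
  rewrite mulmxDr mulmxDl -!map_mxM mulmx_ebase -scalemxAr -scalemxAl -!map_mxM.
  congr (_ + _ *: map_mx _ _).
  by rewrite /C !mulmxA mulmxV // mul1mx -mulmxA mulVmx // mulmx1.
rewrite E !det_mulmx !det_map_mx mulrC mulrA -polyCM coefCM.
by rewrite det_pid_coef1 ?mulr0.
Qed.

Section Lin.
Variable K : fieldType.

Definition linf (l : 'I_3 -> K) : {mpoly K[3]} := \sum_k l k *: 'X_k.

Lemma linf_eval l v : (linf l).@[v] = \sum_k l k * v k.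
Proof. by rewrite /linf rmorph_sum; apply: eq_bigr => k _; rewrite /= mevalZ mevalXU. Qed.

Lemma linf_deriv l k : (linf l)^`M(k) = (l k)%:MP.
Proof.
rewrite /linf raddf_sum (bigD1 k) //= big1 ?addr0.
  by rewrite mderivZ mderivXE eqxx mpolyC1 -mul_mpolyC mulr1.
by move=> i /negbTE Hi; rewrite mderivZ mderivXE Hi mpolyC0 scaler0.
Qed.

Lemma lin_sep (p w : 'I_3 -> K) : (exists k, p k != 0) ->
  (exists c, forall k, w k = c * p k) \/
  (exists l, \sum_k l k * p k = 0 /\ \sum_k l k * w k != 0).
Proof.
move=> [k0 pk0]; pose c := w k0 / p k0.
case: (boolP [forall k, w k == c * p k]) => [/forallP H|].
  by left; exists c => k; apply/eqP.
rewrite negb_forall => /existsP [k1 Hk1]; right.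
pose l k := (k == k1)%:R * p k0 - (k == k0)%:R * p k1.
have Es : forall v : 'I_3 -> K, \sum_k l k * v k = p k0 * v k1 - p k1 * v k0.
  move=> v; rewrite /l (eq_bigr (fun k => (k == k1)%:R * (p k0 * v k) - (k == k0)%:R * (p k1 * v k))); last first.
    by move=> k _; ring.
  rewrite sumrB; congr (_ - _).
    rewrite (bigD1 k1) //= eqxx mul1r big1 ?addr0 // => k /negbTE ->; by rewrite mul0r.
  rewrite (bigD1 k0) //= eqxx mul1r big1 ?addr0 // => k /negbTE ->; by rewrite mul0r.
exists l; rewrite !Es; split; first ring.
apply: contra Hk1 => /eqP E; apply/eqP; rewrite /c.
apply: (mulfI pk0).
have -> : p k0 * w k1 = p k1 * w k0 by apply/eqP; rewrite -subr_eq0 E.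
by rewrite mulrCA mulrA divfK // mulrC.
Qed.

End Lin.

Section Geo.
Variables (K : fieldType) (charK : [pchar K] =i pred0) (N d n : nat).
Variable pts : 'I_N -> 'I_3 -> K.
Hypothesis pts_nz : forall i, exists k, pts i k != 0.
Variable lam : 'I_d -> 'I_d.+1 -> 'I_3 -> K.
Hypothesis hL : IX_generated_by_F pts lam.

Lemma offX (w : 'I_3 -> K) : (forall j, (Fpol lam j).@[w] = 0) ->
  exists i c, forall k, w k = c * pts i k.
Proof.
move=> HF; apply: NNPP => H.
have Hl : forall i, exists l : 'I_3 -> K,
    \sum_k l k * pts i k = 0 /\ \sum_k l k * w k != 0.
  move=> i; case: (lin_sep w (pts_nz i)) => // Hc.
  by exfalso; apply: H; exists i.
have [l Hl'] := fin_all_exists Hl.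
pose h := \prod_i linf (l i).
have hI : in_IX pts h.
  move=> i c; rewrite /h rmorph_prod (bigD1 i) //= linf_eval.
  rewrite (eq_bigr (fun k => c * (l i k * pts i k))); last by move=> k _; ring.
  by rewrite -mulr_sumr (proj1 (Hl' i)) mulr0 mul0r.
have [g Hg] := (hL h).1 hI.
have : h.@[w] = 0.
  by rewrite Hg rmorph_sum big1 // => j _; rewrite rmorphM /= HF mulr0.
apply/eqP; rewrite /h rmorph_prod; apply/prodf_neq0 => i _.
by rewrite /= linf_eval (proj2 (Hl' i)).
Qed.

Definition wt (t : nat) : 'I_3 -> K :=
  fun k => if (k : nat) == 0%N then 1 else if (k : nat) == 1%N then t%:R else 0.

Lemma exists_offX : exists w : 'I_3 -> K, (exists k, w k != 0) /\ exists j, (Fpol lam j).@[w] != 0.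
Proof.
apply: NNPP => H.
have H' : forall t : 'I_N.+1, exists ic : 'I_N * K, forall k, wt t k = ic.2 * pts ic.1 k.
  move=> t; have [i [c Hc]] : exists i c, forall k, wt t k = c * pts i k.
    apply: offX => j; apply/eqP; apply: contraT => Hj; exfalso; apply: H.
    exists (wt t); split; last by exists j.
    by exists (@Ordinal 3 0 isT); rewrite /wt /= oner_neq0.
  by exists (i, c).
have [f Hf] := fin_all_exists H'.
have finj : injective (fun t => (f t).1).
  move=> t t' E.
  have h0 := Hf t (@Ordinal 3 0 isT); have h0' := Hf t' (@Ordinal 3 0 isT).
  have h1 := Hf t (@Ordinal 3 1 isT); have h1' := Hf t' (@Ordinal 3 1 isT).
  rewrite /wt /= in h0 h0' h1 h1'.
  rewrite -E in h0' h1'.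
  have Ec : (f t).2 = (f t').2.
    have P0 : pts (f t).1 (@Ordinal 3 0 isT) != 0.
      by apply/eqP => P0; move: h0; rewrite P0 mulr0 => /eqP; rewrite oner_eq0.
    by apply: (mulIf P0); rewrite -h0 -h0'.
  apply: val_inj; apply: (natf_inj charK).
  by rewrite h1 h1' Ec.
have := leq_card _ finj; rewrite !card_ord ltnn.
by [].
Qed.

End Geo.

Lemma pure_sum m (k : 'I_3) : (\sum_(i < 3) (if i == k then m else 0))%N = m.
Proof. by rewrite (bigD1 k) //= eqxx big1 ?addn0 // => i /negbTE ->. Qed.

Definition pure m k : mono m := mkmono (pure_sum m k).

Lemma monev_pure (K : comRingType) m k (w : 'I_3 -> K) : monev (pure m k) w = w k ^+ m.
Proof.
rewrite /monev (bigD1 k) //= big1 ?mulr1; first by rewrite expo_mkmono eqxx.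
by move=> i /negbTE Hi; rewrite expo_mkmono Hi expr0.
Qed.

Section Main.
Variables (K : fieldType) (charK : [pchar K] =i pred0) (N d n : nat).
Variable pts : 'I_N -> 'I_3 -> K.
Hypothesis pts_nz : forall i, exists k, pts i k != 0.
Variable lam : 'I_d -> 'I_d.+1 -> 'I_3 -> K.
Hypothesis hL : IX_generated_by_F pts lam.

Definition Y (w : 'I_3 -> K) : pcoord n d -> K :=
  fun c => monev c.1 w * (Fpol lam c.2).@[w].

Lemma Y_image (w : 'I_3 -> K) : (exists k, w k != 0) -> (exists j, (Fpol lam j).@[w] != 0) ->
  in_image_phi lam (Y w).
Proof.
move=> [k wk] [j Fj]; split; last by exists w.
exists (pure n k, j); rewrite /Y monev_pure /=.
by rewrite mulf_neq0 // expf_neq0.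
Qed.

Variables (D : nat) (f : {mpoly K[#|{: pcoord n d}|]}).
Hypothesis hf : f \is D.-homog.
Hypothesis Hf : forall y, in_image_phi lam y -> f.@[fun i => y (enum_val i)] = 0.

Lemma f_on_Y (w : 'I_3 -> K) : f.@[evx (Y w)] = 0.
Proof.
case: (boolP [exists c, Y w c != 0]) => [/existsP [c Hc]|].
  apply: Hf; split; first by exists c.
  by exists w.
rewrite negb_exists => /forallP H0.
have [w0 [Hw0 Hj0]] := exists_offX charK pts_nz hL.
have Ew : evx (Y w) = fun i => 0 * evx (Y w0) i.
  by apply: functional_extensionality => i; rewrite mul0r /evx; apply/eqP; rewrite -[_ == 0]negbK H0.
rewrite Ew (homog_scale _ _ hf); case: D => [|D']; last by rewrite expr0n mul0r.
by rewrite expr0 mul1r; apply: Hf; apply: Y_image.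
Qed.

End Main.

Lemma ker1 (K : fieldType) d (M : 'M[K]_(d, d.+1)) (s ph : 'I_d.+1 -> K) j1 :
  (forall l, \sum_j M l j * s j = 0) -> (forall l, \sum_j M l j * ph j = 0) ->
  \det (col' j1 M) != 0 -> ph j1 != 0 -> forall j, s j = s j1 / ph j1 * ph j.
Proof.
move=> Hs Hph hdet hph.
pose c := s j1 / ph j1; pose tau j := s j - c * ph j.
have t1 : tau j1 = 0 by rewrite /tau /c divfK // subrr.
have Ht : forall l, \sum_j M l j * tau j = 0.
  move=> l; rewrite /tau (eq_bigr (fun j => M l j * s j - c * (M l j * ph j))); last first.
    by move=> j _; ring.
  by rewrite sumrB -mulr_sumr Hs Hph mulr0 subrr.
pose v : 'cV[K]_d := \col_j' tau (lift j1 j').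
have Hv : col' j1 M *m v = 0.
  apply/matrixP => l i; rewrite !mxE.
  have := Ht l; rewrite (bigD1_ord j1) //= t1 mulr0 add0r => E.
  by rewrite -[RHS]E; apply: eq_bigr => j' _; rewrite !mxE.
have uA : col' j1 M \in unitmx by rewrite unitmxE unitfE.
have v0 : v = 0 by rewrite -(mulKmx uA v) Hv mulmx0.
have tz : forall j, tau j = 0.
  move=> j; case: (unliftP j1 j) => [j' ->|->] //.
  by have := congr1 (fun A : 'cV[K]_d => A j' 0) v0; rewrite !mxE.
move=> j; apply/eqP; rewrite -subr_eq0; apply/eqP; exact: tz.
Qed.

Section CaseA.
Variables (K : fieldType) (charK : [pchar K] =i pred0) (N d n : nat).
Variable pts : 'I_N -> 'I_3 -> K.
Hypothesis pts_nz : forall i, exists k, pts i k != 0.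
Variable lam : 'I_d -> 'I_d.+1 -> 'I_3 -> K.
Hypothesis hL : IX_generated_by_F pts lam.
Variables (D : nat) (f : {mpoly K[#|{: pcoord n d}|]}).
Hypothesis hf : f \is D.-homog.
Hypothesis Hf : forall y, in_image_phi lam y -> f.@[fun i => y (enum_val i)] = 0.

Lemma caseA (x : pcoord n d -> K) w sg j1 :
  (forall a j, x (a, j) = monev a w * sg j) ->
  (forall l, \sum_j (\sum_k lam l j k * w k) * sg j = 0) ->
  (Fpol lam j1).@[w] != 0 -> f.@[evx x] = 0.
Proof.
move=> Hx Hl Hj1.
pose ph j := (Fpol lam j).@[w].
have Hs : forall l, \sum_j Lev lam w l j * sg j = 0.
  by move=> l; rewrite -[RHS](Hl l); apply: eq_bigr => j _; rewrite mxE.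
have Hph : forall l, \sum_j Lev lam w l j * ph j = 0.
  by move=> l; rewrite -[RHS](LF0_eval lam w l); apply: eq_bigr => j _; rewrite mxE.
have hdet : \det (col' j1 (Lev lam w)) != 0.
  by apply: contra_neq Hj1; rewrite Fpol_eval => ->; rewrite mulr0.
have E := ker1 Hs Hph hdet Hj1.
have -> : evx x = fun i => (sg j1 / ph j1) * evx (Y lam w) i.
  apply: functional_extensionality => i; rewrite /evx /Y.
  case: (enum_val i) => a j /=; rewrite Hx E /ph; ring.
by rewrite (homog_scale _ _ hf) (f_on_Y charK pts_nz hL hf Hf) mulr0.
Qed.

End CaseA.

Section CaseB.
Variables (K : fieldType) (charK : [pchar K] =i pred0) (N d n : nat).
Variable pts : 'I_N -> 'I_3 -> K.
Hypothesis pts_nz : forall i, exists k, pts i k != 0.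
Variable lam : 'I_d -> 'I_d.+1 -> 'I_3 -> K.
Hypothesis hL : IX_generated_by_F pts lam.
Variables (D : nat) (f : {mpoly K[#|{: pcoord n d}|]}).
Hypothesis hf : f \is D.-homog.
Hypothesis Hf : forall y, in_image_phi lam y -> f.@[fun i => y (enum_val i)] = 0.

Lemma F_vanish j i c : (Fpol lam j).@[fun k => c * pts i k] = 0.
Proof.
apply: (hL (Fpol lam j)).2; exists (fun j' => (j' == j)%:R%:MP).
rewrite (bigD1 j) //= eqxx mpolyC1 mul1r big1 ?addr0 //.
by move=> j' /negbTE ->; rewrite mpolyC0 mul0r.
Qed.

Variable i0 : 'I_N.
Local Notation p := (pts i0).

Lemma F_vanish_p j : (Fpol lam j).@[p] = 0.
Proof. by rewrite -(F_vanish j i0 1); apply: meval_eq => k; rewrite mul1r. Qed.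

Definition Xp (s : 'I_d.+1 -> K) : pcoord n d -> K := fun c => monev c.1 p * s c.2.

Definition dF (q : 'I_3 -> K) (j : 'I_d.+1) : K := \sum_k q k * ((Fpol lam j)^`M(k)).@[p].

Lemma line_lemma (q : 'I_3 -> K) : f.@[evx (Xp (dF q))] = 0.
Proof.
pose Phi j := lineP p q (Fpol lam j).
have HPsi : forall j, exists Psi : {poly K}, Phi j = Psi * 'X.
  move=> j; have : root (Phi j) 0 by rewrite /root horner_coef0 /Phi lineP_coef0 F_vanish_p.
  by move/factor_theorem => [Psi E]; exists Psi; rewrite E polyC0 subr0.
have [Psi EPsi] := fin_all_exists HPsi.
have Psi0 : forall j, (Psi j).[0] = dF q j.
  move=> j; have := coefMX (Psi j) 1; rewrite /= -EPsi /Phi Dlem => E.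
  by rewrite horner_coef0 -E.
pose Pa (a : mono n) : {poly K} := \prod_k ((p k)%:P + (q k)%:P * 'X) ^+ expo a k.
have PaE : forall a t, (Pa a).[t] = monev a (fun k => p k + q k * t).
  move=> a t; rewrite /Pa horner_prod /monev; apply: eq_bigr => k _.
  by rewrite horner_exp hornerD hornerC hornerCM hornerX.
pose G (c : pcoord n d) := Pa c.1 * Psi c.2.
pose hp := mmap polyC (fun i => G (enum_val i)) f.
have hpE : forall t, hp.[t] = f.@[fun i => (G (enum_val i)).[t]] by move=> t; exact: hmmap.
have hp0 : hp = 0.
  apply: (poly_zero_nz charK) => t tn0.
  apply: (mulfI (expf_neq0 D tn0)); rewrite mulr0 hpE -(homog_scale _ _ hf).
  rewrite -[RHS](f_on_Y charK pts_nz hL hf Hf (fun k => p k + q k * t)).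
  apply: meval_eq => i; rewrite /evx /Y /G; case: (enum_val i) => a j /=.
  rewrite hornerM PaE -lineP_eval -/(Phi j) EPsi hornerM hornerX; ring.
have := congr1 (fun P => P.[0]) hp0; rewrite /= horner0 hpE => <-.
apply: meval_eq => i; rewrite /evx /Xp /G; case: (enum_val i) => a j /=.
rewrite hornerM PaE Psi0; congr (_ * _); apply: eq_bigr => k _.
by rewrite mulr0 addr0.
Qed.

End CaseB.

Section Rank.
Variables (K : fieldType) (N d : nat).
Variable pts : 'I_N -> 'I_3 -> K.
Hypothesis pts_nz : forall i, exists k, pts i k != 0.
Hypothesis pts_dist : forall i i', i != i' ->
      ~ exists c : K, forall k, pts i k = c * pts i' k.
Variable lam : 'I_d -> 'I_d.+1 -> 'I_3 -> K.
Hypothesis hL : IX_generated_by_F pts lam.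
Variable i0 : 'I_N.
Local Notation p := (pts i0).

Definition Jm : 'M[K]_(3, d.+1) := \matrix_(k, j) ((Fpol lam j)^`M(k)).@[p].
Definition Lp := Lev lam p.

Lemma JL0 : Jm *m (Lp)^T = 0.
Proof.
apply/matrixP => k l; rewrite !mxE.
have := congr1 (fun P => (P^`M(k)).@[p]) (LF0 lam l).
rewrite (big_morph (mderiv k) (@mderivD _ _ k) (@mderiv0 _ _ k)) mderiv0 meval0.
rewrite (big_morph (meval p) (@mevalD _ _ p) (@meval0 _ _ p)) => E; rewrite -[RHS]E.
apply: eq_bigr => j _.
rewrite [in RHS]mderivM [in RHS]mevalD [X in _ = X + _]mevalM [X in _ = _ + X]mevalM.
rewrite (F_vanish_p hL i0) mulr0 add0r mulrC [Jm k j]mxE; congr (_ * _).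
have := congr1 (fun M : 'M[K]_(d, d.+1) => M l j) (meval_Lmat lam p).
by rewrite /Lp !mxE.
Qed.

Lemma J_span (l : 'I_3 -> K) : \sum_k l k * p k = 0 ->
  exists g : 'I_d.+1 -> K, forall k, l k = \sum_j Jm k j * g j.
Proof.
move=> Hl.
have Hli : forall i, exists li : 'I_3 -> K, i != i0 ->
    \sum_k li k * pts i k = 0 /\ \sum_k li k * p k != 0.
  move=> i; case: (boolP (i != i0)) => hi; last by exists (fun _ => 0).
  case: (lin_sep p (pts_nz i)) => [Hc|[li Hli]]; last by exists li.
  have hi' : i0 != i by rewrite eq_sym.
  by exfalso; apply: (pts_dist hi').
have [li Hli'] := fin_all_exists Hli.
pose h := \prod_(i | i != i0) linf (li i).
have hp : h.@[p] != 0.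
  rewrite /h rmorph_prod; apply/prodf_neq0 => i hi.
  by rewrite /= linf_eval (proj2 (Hli' i hi)).
pose Q := linf l * h.
have hQ : in_IX pts Q.
  move=> i c; rewrite /Q mevalM; case: (eqVneq i i0) => [->|hi].
    rewrite linf_eval (eq_bigr (fun k => c * (l k * p k))); last by move=> k _; ring.
    by rewrite -mulr_sumr Hl mulr0 mul0r.
  rewrite /h rmorph_prod (bigD1 i) //= (linf_eval (li i)).
  rewrite (eq_bigr (fun k => c * (li i k * pts i k))); last by move=> k _ /=; ring.
  by rewrite -mulr_sumr (proj1 (Hli' i hi)) mulr0 mul0r mulr0.
have [g Hg] := (hL Q).1 hQ.
exists (fun j => (g j).@[p] / h.@[p]) => k.
have E1 : (Q^`M(k)).@[p] = l k * h.@[p].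
  by rewrite /Q mderivM mevalD !mevalM linf_deriv mevalC linf_eval Hl mul0r addr0.
have E2 : (Q^`M(k)).@[p] = \sum_j Jm k j * (g j).@[p].
  rewrite Hg (big_morph (mderiv k) (@mderivD _ _ k) (@mderiv0 _ _ k)).
  rewrite (big_morph (meval p) (@mevalD _ _ p) (@meval0 _ _ p)).
  apply: eq_bigr => j _; rewrite mderivM mevalD [X in X + _]mevalM [X in _ + X]mevalM.
  by rewrite (F_vanish_p hL i0) mulr0 add0r [Jm k j]mxE mulrC.
apply: (mulIf hp); rewrite -E1 E2 mulr_suml; apply: eq_bigr => j _.
by rewrite -mulrA divfK.
Qed.

Lemma rankJ : (2 <= \rank Jm)%N.
Proof.
pose P0 : 'M[K]_(3, 1) := \col_k p k.
have rP0 : \rank P0 = 1%N.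
  apply/eqP; rewrite eqn_leq rank_leq_col lt0n mxrank_eq0 /=.
  have [k pk] := pts_nz i0; apply: contra_neq pk => E.
  by have := congr1 (fun M : 'M[K]_(3, 1) => M k 0) E; rewrite !mxE.
have rK : \rank (kermx P0) = 2%N by rewrite mxrank_ker rP0.
have sK : (kermx P0 <= Jm^T)%MS.
  apply/row_subP => i.
  have Hl : \sum_k (row i (kermx P0)) 0 k * p k = 0.
    have := congr1 (fun M : 'M[K]_(3, 1) => M i 0) (mulmx_ker P0).
    by rewrite !mxE => E; rewrite -[RHS]E; apply: eq_bigr => k _; rewrite !mxE.
  have [g Hg] := J_span Hl.
  have -> : row i (kermx P0) = (\row_j g j) *m Jm^T.
    apply/matrixP => a k; rewrite (ord1 a) Hg !mxE; apply: eq_bigr => j _.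
    by rewrite !mxE mulrC.
  exact: submxMl.
by rewrite -mxrank_tr -[X in (X <= _)%N]rK mxrankS.
Qed.

Lemma rankL : ~ ((\rank Lp).+2 <= d)%N.
Proof.
move=> hr.
have J0 : Jm = 0.
  apply/matrixP => k j; rewrite [RHS]mxE.
  pose ek : 'I_3 -> K := fun k' => (k' == k)%:R.
  have -> : Jm k j = (lineP p ek (Fpol lam j))`_1.
    rewrite Dlem mxE (bigD1 k) //= big1 ?addr0; first by rewrite /ek eqxx mul1r.
    by move=> k' /negbTE hk; rewrite /ek hk mul0r.
  rewrite /lineP (Fpol_morph (mmap polyC (fun k0 => (p k0)%:P + (ek k0)%:P * 'X))).
  set M := map_mx _ _.
  have EM : col' j M = map_mx polyC (col' j Lp) + 'X *: map_mx polyC (col' j (Lev lam ek)).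
    apply/matrixP => l j'; rewrite !mxE rmorph_sum.
    rewrite (eq_bigr (fun k' => (lam l (lift j j') k' * p k')%:P + 'X * (lam l (lift j j') k' * ek k')%:P)).
      by rewrite big_split /= -mulr_sumr !rmorph_sum.
    move=> k' _; rewrite /= mmapZ mmapX mmap1U !rmorphM /=; ring.
  have -> : (-1) ^+ j = ((-1) ^+ j)%:P :> {poly K} by rewrite rmorphXn rmorphN1.
  rewrite coefCM EM det_lowrank_coef1 ?mulr0 //.
  by apply: leq_trans hr; rewrite ltnS ltnS rank_col'.
by have := rankJ; rewrite J0 mxrank0.
Qed.

Lemma sigma_dF (sg : 'I_d.+1 -> K) :
  (forall l, \sum_j Lp l j * sg j = 0) -> exists q, forall j, sg j = dF pts lam i0 q j.
Proof.
move=> Hs.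
have rK : (\rank (kermx Lp^T) <= 2)%N.
  rewrite mxrank_ker mxrank_tr leq_subLR.
  by have := rankL; move/negP; rewrite -ltnNge ltnS addn2.
have sJ : (Jm <= kermx Lp^T)%MS by apply/sub_kermxP; exact: JL0.
have sK : (kermx Lp^T <= Jm)%MS.
  rewrite -(mxrank_leqif_sup sJ).2; apply/eqP/anti_leq.
  by rewrite mxrankS // (leq_trans rK) // rankJ.
pose s : 'rV[K]_d.+1 := \row_j sg j.
have ss : (s <= kermx Lp^T)%MS.
  apply/sub_kermxP; apply/matrixP => a l; rewrite (ord1 a) !mxE -[RHS](Hs l).
  by apply: eq_bigr => j _; rewrite !mxE mulrC.
have [r Hr] := submxP (submx_trans ss sK).
exists (fun k => r 0 k) => j.
have := congr1 (fun M : 'rV[K]_d.+1 => M 0 j) Hr; rewrite !mxE => ->.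
by apply: eq_bigr => k _; rewrite mxE mulrC.
Qed.

End Rank.

Lemma monev_scale (K : comRingType) n (a : mono n) (c : K) (v : 'I_3 -> K) :
  monev a (fun k => c * v k) = c ^+ n * monev a v.
Proof.
rewrite /monev (eq_bigr (fun k => c ^+ expo a k * v k ^+ expo a k)); last first.
  by move=> k _; rewrite exprMn.
by rewrite big_split /= prodrXr expo_sum.
Qed.

Unset Implicit Arguments. Set Strict Implicit. Set Printing Implicit Defensive.

Theorem theorem2p4 (K : closedFieldType) (charK : [pchar K] =i pred0)
  (d n : nat) (hd : (1 <= d)%N) (hn : (1 <= n)%N)
  (pts : 'I_('C(d.+1, 2)) -> 'I_3 -> K)
  (pts_nz : forall i, exists k, pts i k != 0)
  (pts_dist : forall i i', i != i' ->
      ~ exists c : K, forall k, pts i k = c * pts i' k)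
  (pts_gen : generic_position pts)
  (lam : 'I_d -> 'I_d.+1 -> 'I_3 -> K)
  (hL : IX_generated_by_F pts lam) :
  forall x : pcoord n d -> K, (exists c, x c != 0) ->
    (inV lam x <-> zariski_closure (in_image_phi lam) x).
Proof.
move=> x xnz; split; last exact: closure_to_V.
move=> HV D f hf Hf; change (f.@[evx x] = 0).
have [w [sg [wnz sgnz Hx Hl]]] := V_structure hn xnz HV.
case: (boolP [exists j, (Fpol lam j).@[w] != 0]) => [/existsP [j1 Hj1]|HF].
  exact: (caseA charK pts_nz hL hf Hf Hx Hl Hj1).
have HF' : forall j, (Fpol lam j).@[w] = 0.
  by move=> j; apply/eqP; move: HF; rewrite negb_exists => /forallP /(_ j); rewrite negbK.
have [i0 [c Hc]] := offX pts_nz hL HF'.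
have cnz : c != 0.
  by have [k wk] := wnz; apply: contra_neq wk => c0; rewrite Hc c0 mul0r.
have Hlp : forall l, \sum_j Lp pts lam i0 l j * sg j = 0.
  move=> l; apply: (mulfI cnz); rewrite mulr0 -[RHS](Hl l) mulr_sumr.
  apply: eq_bigr => j _; rewrite /Lp /Lev mxE mulrA mulr_sumr; congr (_ * _).
  by apply: eq_bigr => k _; rewrite Hc; ring.
have [q Hq] := sigma_dF pts_nz pts_dist hL Hlp.
have -> : evx x = fun i => c ^+ n * evx (Xp pts i0 (dF pts lam i0 q)) i.
  apply: functional_extensionality => i; rewrite /evx /Xp.
  case: (enum_val i) => a j /=; rewrite Hx -Hq.
  have -> : w = fun k => c * pts i0 k by apply: functional_extensionality.
  by rewrite monev_scale mulrA.
by rewrite (homog_scale _ _ hf) (line_lemma charK pts_nz hL hf Hf) mulr0.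
Qed.
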